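(* Let $f$ be a $C^1$ diffeomorphism of $M=\mathbb{R}^d/\mathbb{Z}^d$ and let $x\in M$ be regularly hyperbolic with coefficient $0<\lambda<1$. Then for all positive integers $n,m$ with $n>1/\log(1/\lambda)$ and $n>m$, there is a continuous linear operator $\Upsilon:X_n\to X_m$ with $\Upsilon(\Gamma_{o(x)}\eta)=\eta$ and $\Gamma_{o(x)}(\Upsilon\eta)=\eta$ for all $\eta\in X_n$.
   Context: Tangent spaces identified with $\mathbb{R}^d$, $|\cdot|$ Euclidean norm. $o(x)=(f^k(x))_{k}$, $(\Gamma_{\mathbf{x}}\eta)_k=\eta_k-Df(x_{k-1})\eta_{k-1}$; $\|\eta\|_n=\sup_k e^{-|k|/n}|\eta_k|$, $X_n=\{\|\eta\|_n<\infty\}$. A point $x$ is regularly hyperbolic (with coefficient $\lambda\in(0,1)$) if, with $x_k=f^k(x)$, there is a splitting $T_{x_k}M=E^s(x_k)\oplus E^u(x_k)$ with $Df(x_k)E^{s}(x_k)=E^{s}(x_{k+1})$, $Df(x_k)E^{u}(x_k)=E^{u}(x_{k+1})$, and for each sufficiently small $\varepsilon>0$ a constant $c(x,\varepsilon)$ such that for all $k\in\mathbb{Z}$, $j>0$: $|Df^j(x_k)\eta|\le c(x,\varepsilon)\lambda^je^{\varepsilon|k|}|\eta|$ for $\eta\in E^s(x_k)$, $|Df^{-j}(x_k)\eta|\le c(x,\varepsilon)\lambda^je^{\varepsilon|k|}|\eta|$ for $\eta\in E^u(x_k)$, and if $\eta=\eta^s+\eta^u$ is the splitting of $\eta\in T_{x_k}M$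 then $|\eta^s|,|\eta^u|\le c(x,\varepsilon)e^{\varepsilon|k|}|\eta|$. *)

(* Defs.v *)
From Stdlib Require Import Reals ZArith ClassicalEpsilon.
From mathcomp Require Import all_boot.
Set Implicit Arguments. Unset Strict Implicit.
Open Scope R_scope.

Definition vec (d : nat) := 'I_d -> R.
Definition mat (d : nat) := 'I_d -> 'I_d -> R.

Definition rsum (d : nat) (f : 'I_d -> R) : R := foldr Rplus 0 (map f (enum 'I_d)).

Definition vzero (d : nat) : vec d := fun _ => 0.
Definition vadd d (u v : vec d) : vec d := fun i => u i + v i.
Definition vsub d (u v : vec d) : vec d := fun i => u i - v i.
Definition vscale d (a : R) (u : vec d) : vec d := fun i => a * u i.
Definition vnorm d (v : vec d) : R := sqrt (rsum (fun i => v i ^ 2)).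
Definition mapply d (A : mat d) (v : vec d) : vec d := fun i => rsum (fun j => A i j * v j).

Definition frechet d (F : vec d -> vec d) (x : vec d) (A : mat d) : Prop :=
  forall eps, 0 < eps -> exists delta, 0 < delta /\ forall y,
    vnorm (vsub y x) < delta ->
    vnorm (vsub (vsub (F y) (F x)) (mapply A (vsub y x))) <= eps * vnorm (vsub y x).

Definition C1_with d (F : vec d -> vec d) (DF : vec d -> mat d) : Prop :=
  (forall x, frechet F x (DF x)) /\
  (forall x i j eps, 0 < eps -> exists delta, 0 < delta /\ forall y,
      vnorm (vsub y x) < delta -> Rabs (DF y i j - DF x i j) < eps).

(* The torus M = R^d / Z^d: points are represented by vectors, modulo Z^d *)
Definition int_vec d (v : vec d) : Prop := forall i, exists z : Z, v i = IZR z.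
Definition teq d (x y : vec d) : Prop := int_vec (vsub x y).

(* f is a C^1 diffeomorphism of M, given through C^1 lifts F (of f) and G (of f^-1),
   with derivatives DF, DG (tangent spaces identified with R^d). *)
Definition torus_C1_diffeo d (F : vec d -> vec d) (DF : vec d -> mat d)
    (G : vec d -> vec d) (DG : vec d -> mat d) : Prop :=
  C1_with F DF /\ C1_with G DG /\
  (forall x y, teq x y -> teq (F x) (F y)) /\
  (forall x y, teq x y -> teq (G x) (G y)) /\
  (forall x, teq (G (F x)) x) /\ (forall x, teq (F (G x)) x).

Definition torbit d (F G : vec d -> vec d) (x : vec d) (k : Z) : vec d :=
  match k with
  | Z0 => x
  | Zpos p => iter (Pos.to_nat p) F x
  | Zneg p => iter (Pos.to_nat p) G x
  end.

(* Df^j(x_k) = Df(x_{k+j-1}) ... Df(x_k)  (chain rule) *)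
Fixpoint dfpow d (DF : vec d -> mat d) (orb : Z -> vec d) (k : Z) (j : nat) (v : vec d)
  : vec d :=
  match j with
  | O => v
  | S j' => mapply (DF (orb (k + Z.of_nat j')%Z)) (dfpow DF orb k j' v)
  end.

(* Df^{-j}(x_k) = D(f^-1)(x_{k-j+1}) ... D(f^-1)(x_k) *)
Fixpoint dfneg d (DG : vec d -> mat d) (orb : Z -> vec d) (k : Z) (j : nat) (v : vec d)
  : vec d :=
  match j with
  | O => v
  | S j' => mapply (DG (orb (k - Z.of_nat j')%Z)) (dfneg DG orb k j' v)
  end.

Definition is_subspace d (E : vec d -> Prop) : Prop :=
  E (@vzero d) /\ (forall u v, E u -> E v -> E (vadd u v)) /\
  (forall a u, E u -> E (vscale a u)).

Definition splitting d (Es Eu : vec d -> Prop) : Prop :=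
  is_subspace Es /\ is_subspace Eu /\
  (forall v, Es v -> Eu v -> v = @vzero d) /\
  (forall v, exists s u, Es s /\ Eu u /\ v = vadd s u).

Definition regularly_hyperbolic d (DF DG : vec d -> mat d) (orb : Z -> vec d)
    (lam : R) : Prop :=
  exists Es Eu : Z -> vec d -> Prop,
    (forall k, splitting (Es k) (Eu k)) /\
    (forall k v, Es (k + 1)%Z v <-> exists w, Es k w /\ v = mapply (DF (orb k)) w) /\
    (forall k v, Eu (k + 1)%Z v <-> exists w, Eu k w /\ v = mapply (DF (orb k)) w) /\
    exists eps0, 0 < eps0 /\ forall eps, 0 < eps < eps0 -> exists c : R,
      (forall (k : Z) (j : nat), (0 < j)%nat -> forall v, Es k v ->
         vnorm (dfpow DF orb k j v) <= c * lam ^ j * exp (eps * Rabs (IZR k)) * vnorm v) /\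
      (forall (k : Z) (j : nat), (0 < j)%nat -> forall v, Eu k v ->
         vnorm (dfneg DG orb k j v) <= c * lam ^ j * exp (eps * Rabs (IZR k)) * vnorm v) /\
      (forall (k : Z) v s u, Es k s -> Eu k u -> v = vadd s u ->
         vnorm s <= c * exp (eps * Rabs (IZR k)) * vnorm v /\
         vnorm u <= c * exp (eps * Rabs (IZR k)) * vnorm v).

Definition seqv (d : nat) := Z -> vec d.

Definition wset d (n : nat) (eta : seqv d) (r : R) : Prop :=
  exists k : Z, r = exp (- Rabs (IZR k) / INR n) * vnorm (eta k).

Definition wnorm d (n : nat) (eta : seqv d) : R :=
  epsilon (inhabits 0) (fun s => is_lub (wset n eta) s).

Definition inX d (n : nat) (eta : seqv d) : Prop :=
  exists C, forall k : Z, exp (- Rabs (IZR k) / INR n) * vnorm (eta k) <= C.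

Definition GammaOp d (DF : vec d -> mat d) (orb : Z -> vec d) (eta : seqv d) : seqv d :=
  fun k => vsub (eta k) (mapply (DF (orb (k - 1)%Z)) (eta (k - 1)%Z)).

(* Main.v *)
Require Import Defs.
From Stdlib Require Import Reals ZArith.
From mathcomp Require Import all_boot.
From Stdlib Require Import Lra Lia FunctionalExtensionality ClassicalEpsilon.
From Coquelicot Require Import Coquelicot.
Open Scope R_scope.
Set Implicit Arguments. Unset Strict Implicit.

Lemma exs_ext (a b : nat -> R) : (forall n, a n = b n) -> ex_series a -> ex_series b.
Proof. move=> H; exact: ex_series_ext. Qed.
Lemma exs_plus (a b : nat -> R) : ex_series a -> ex_series b -> ex_series (fun n => a n + b n).
Proof. move=> Ha Hb; exact: (ex_series_plus a b Ha Hb). Qed.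
Lemma exs_scal (c : R) (a : nat -> R) : ex_series a -> ex_series (fun n => c * a n).
Proof. move=> Ha; exact: (ex_series_scal_l c a Ha). Qed.
Lemma exs_minus (a b : nat -> R) : ex_series a -> ex_series b -> ex_series (fun n => a n - b n).
Proof. move=> Ha Hb. apply: (@exs_ext (fun n => a n + (-1) * b n)). move=> n; ring.
apply: exs_plus => //. exact: exs_scal. Qed.
Lemma exs_le (a b : nat -> R) : (forall n, Rabs (a n) <= b n) -> ex_series b -> ex_series a.
Proof. move=> H Hb; by apply: (ex_series_le a b). Qed.
Lemma ex_series_zero : ex_series (fun _ : nat => 0).
Proof. apply: (@exs_ext (fun n => 0 * (/2)^n)). move=> n; ring.
apply: (@exs_scal 0 (fun n => (/2)^n)). apply: ex_series_geom. rewrite Rabs_right; lra. Qed.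
Lemma Series_zero : Series (fun _ : nat => 0) = 0.
Proof. rewrite (Series_ext _ (fun n => 0 * (/2)^n)). rewrite Series_scal_l; ring. move=> n; ring. Qed.

Section Lsum.
Variable T : eqType.
Definition lsum (l : seq T) (f : T -> R) := foldr Rplus 0 (map f l).

Lemma lsum_cons x l f : lsum (x :: l) f = f x + lsum l f.
Proof. reflexivity. Qed.
Lemma lsum_nil f : lsum [::] f = 0.
Proof. reflexivity. Qed.

Lemma lsum_ext l f g : (forall i, f i = g i) -> lsum l f = lsum l g.
Proof. move=> H; elim: l => [|x l IH] //=. rewrite !lsum_cons IH H //. Qed.

Lemma lsum_plus l f g : lsum l (fun i => f i + g i) = lsum l f + lsum l g.
Proof. elim: l => [|x l IH]; rewrite ?lsum_nil ?lsum_cons; [lra|rewrite IH; lra]. Qed.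

Lemma lsum_scal l c f : lsum l (fun i => c * f i) = c * lsum l f.
Proof. elim: l => [|x l IH]; rewrite ?lsum_nil ?lsum_cons; [lra|rewrite IH; lra]. Qed.

Lemma lsum_le l f g : (forall i, f i <= g i) -> lsum l f <= lsum l g.
Proof. move=> H; elim: l => [|x l IH]; rewrite ?lsum_nil ?lsum_cons; [lra|]. have := H x; lra. Qed.

Lemma lsum_nonneg l f : (forall i, 0 <= f i) -> 0 <= lsum l f.
Proof. move=> H; elim: l => [|x l IH]; rewrite ?lsum_nil ?lsum_cons; [lra|]. have := H x; lra. Qed.

Lemma lsum_abs l f : Rabs (lsum l f) <= lsum l (fun i => Rabs (f i)).
Proof. elim: l => [|x l IH]; rewrite ?lsum_nil ?lsum_cons. rewrite Rabs_R0; lra.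
have := Rabs_triang (f x) (lsum l f); lra. Qed.

Lemma lsum_term l f i : (forall i, 0 <= f i) -> i \in l -> f i <= lsum l f.
Proof. move=> H; elim: l => [|x l IH] //. rewrite in_cons lsum_cons => /orP [/eqP ->|Hi].
have := @lsum_nonneg l f H; lra. have := IH Hi; have := H x; lra. Qed.

Lemma lsum_sq l f : lsum l (fun i => f i ^ 2) <= (lsum l (fun i => Rabs (f i))) ^ 2.
Proof. elim: l => [|x l IH]; rewrite ?lsum_nil ?lsum_cons. lra.
have H0 := @lsum_nonneg l (fun i => Rabs (f i)) (fun i => Rabs_pos (f i)).
have Ha := Rabs_pos (f x).
have : f x ^ 2 = Rabs (f x) ^ 2 by rewrite -!Rsqr_pow2 -Rsqr_abs.
move=> ->. nra. Qed.

Lemma lsum_ex_series l (g : nat -> T -> R) :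
  (forall i, ex_series (fun j => g j i)) -> ex_series (fun j => lsum l (g j)).
Proof. move=> H; elim: l => [|x l IH].
- apply: (@exs_ext (fun _ => 0)). by move=> n; rewrite lsum_nil.
  exact: ex_series_zero.
- apply: (@exs_ext (fun j => g j x + lsum l (g j))).
  by move=> n; rewrite lsum_cons.
  by apply: exs_plus.
Qed.

Lemma lsum_series l (g : nat -> T -> R) :
  (forall i, ex_series (fun j => g j i)) ->
  Series (fun j => lsum l (g j)) = lsum l (fun i => Series (fun j => g j i)).
Proof. move=> H; elim: l => [|x l IH].
- rewrite lsum_nil. rewrite (Series_ext _ (fun _ => 0)). by rewrite Series_zero.
  by move=> n; rewrite lsum_nil.
- rewrite lsum_cons -IH. rewrite (Series_ext _ (fun j => g j x + lsum l (g j))).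
  rewrite Series_plus //. by apply: lsum_ex_series.
  by move=> n; rewrite lsum_cons.
Qed.
End Lsum.

Section Vec.
Variable d : nat.
Definition Dd : R := rsum (fun _ : 'I_d => 1).
Lemma rsumE (f : 'I_d -> R) : rsum f = lsum (enum 'I_d) f.
Proof. reflexivity. Qed.
Lemma Dd_nonneg : 0 <= Dd.
Proof. rewrite /Dd rsumE. apply: lsum_nonneg => _; lra. Qed.
Lemma vnorm_nonneg (v : vec d) : 0 <= vnorm v.
Proof. exact: sqrt_pos. Qed.
Lemma vnorm_comp (v : vec d) i : Rabs (v i) <= vnorm v.
Proof. rewrite /vnorm -sqrt_Rsqr_abs Rsqr_pow2. apply: sqrt_le_1_alt.
rewrite rsumE. apply: (@lsum_term _ _ (fun i => v i ^ 2)). move=> j; nra. by rewrite mem_enum. Qed.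
Lemma vnorm_l1 (v : vec d) : vnorm v <= rsum (fun i => Rabs (v i)).
Proof. rewrite /vnorm. rewrite -(sqrt_pow2 (rsum (fun i => Rabs (v i)))).
apply: sqrt_le_1_alt. rewrite !rsumE. exact: lsum_sq.
rewrite rsumE; apply: lsum_nonneg => i; exact: Rabs_pos. Qed.
Lemma vnorm_bnd (v : vec d) b : (forall i, Rabs (v i) <= b) -> vnorm v <= b * Dd.
Proof. move=> H. apply: Rle_trans (vnorm_l1 v) _. rewrite /Dd !rsumE -lsum_scal.
apply: lsum_le => i. have := H i; lra. Qed.
Lemma vnorm_add (u v : vec d) : vnorm (vadd u v) <= Dd * (vnorm u + vnorm v).
Proof. rewrite Rmult_comm; apply: vnorm_bnd => i. rewrite /vadd.
have := Rabs_triang (u i) (v i); have := vnorm_comp u i; have := vnorm_comp v i; lra. Qed.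
Lemma vnorm_sub (u v : vec d) : vnorm (vsub u v) <= Dd * (vnorm u + vnorm v).
Proof. rewrite Rmult_comm; apply: vnorm_bnd => i. rewrite /vsub /Rminus.
have := Rabs_triang (u i) (- v i); rewrite Rabs_Ropp.
have := vnorm_comp u i; have := vnorm_comp v i; lra. Qed.
Lemma vnorm_scale a (v : vec d) : vnorm (vscale a v) = Rabs a * vnorm v.
Proof. rewrite /vnorm /vscale. rewrite (_ : rsum _ = a ^ 2 * rsum (fun i => v i ^ 2)).
rewrite sqrt_mult. by rewrite -Rsqr_pow2 sqrt_Rsqr_abs. nra.
rewrite rsumE; apply: lsum_nonneg => i; nra.
rewrite !rsumE -lsum_scal. apply: lsum_ext => i; ring. Qed.
Lemma vnorm_small (v : vec d) : (forall e, 0 < e -> vnorm v <= e) -> forall i, v i = 0.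
Proof. move=> H i. have Hc := vnorm_comp v i.
case: (Req_dec (v i) 0) => // Hn. have Hp : 0 < Rabs (v i) by apply: Rabs_pos_lt.
have := H (Rabs (v i) / 2); lra. Qed.

Definition lin (f : vec d -> vec d) := forall a b u v,
  f (vadd (vscale a u) (vscale b v)) = vadd (vscale a (f u)) (vscale b (f v)).
Lemma lin_sub f : lin f -> forall u v, f (vsub u v) = vsub (f u) (f v).
Proof. move=> Hf u v. have E : forall u v : vec d, vsub u v = vadd (vscale 1 u) (vscale (-1) v).
 move=> u' v'; apply: functional_extensionality => i; rewrite /vsub /vadd /vscale; ring.
by rewrite !E Hf. Qed.
Lemma lin_comp f g : lin f -> lin g -> lin (fun v => f (g v)).
Proof. move=> Hf Hg a b u v. by rewrite Hg Hf. Qed.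
Lemma lin_mapply (A : mat d) : lin (mapply A).
Proof. move=> a b u v; apply: functional_extensionality => i.
rewrite /mapply /vadd /vscale !rsumE -!lsum_scal -lsum_plus. apply: lsum_ext => j; ring. Qed.
Lemma lin_zero f : lin f -> f (@vzero d) = @vzero d.
Proof. move=> Hf. have E : @vzero d = vadd (vscale 0 (@vzero d)) (vscale 0 (@vzero d)).
 apply: functional_extensionality => i; rewrite /vzero /vadd /vscale; ring.
rewrite E Hf. apply: functional_extensionality => i; rewrite /vzero /vadd /vscale; ring. Qed.

Lemma mapply_bnd (A : mat d) : exists K, 0 <= K /\ forall v, vnorm (mapply A v) <= K * vnorm v.
Proof. set S := rsum (fun i => rsum (fun j => Rabs (A i j))).
have HS : forall i, rsum (fun j => Rabs (A i j)) <= S.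
  move=> i; rewrite /S rsumE. apply: (@lsum_term _ _ (fun i => rsum (fun j => Rabs (A i j)))).
  move=> k; rewrite rsumE; apply: lsum_nonneg => j; exact: Rabs_pos. by rewrite mem_enum.
have HS0 : 0 <= S. rewrite /S rsumE; apply: lsum_nonneg => k; rewrite rsumE; apply: lsum_nonneg => j; exact: Rabs_pos.
exists (S * Dd); split. have := Dd_nonneg; nra.
move=> v. have -> : S * Dd * vnorm v = (S * vnorm v) * Dd by ring.
apply: vnorm_bnd => i. rewrite /mapply rsumE. apply: Rle_trans (lsum_abs _ _) _.
apply: Rle_trans (_ : lsum (enum 'I_d) (fun j => Rabs (A i j) * vnorm v) <= _).
 apply: lsum_le => j. rewrite Rabs_mult. have := vnorm_comp v j; have := Rabs_pos (A i j); nra.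
rewrite (@lsum_ext _ _ _ (fun j => vnorm v * Rabs (A i j))); last by move=> j; ring.
rewrite lsum_scal. have := HS i; rewrite rsumE; have := vnorm_nonneg v. move=> H0 H1. rewrite (Rmult_comm S). apply: Rmult_le_compat_l; [exact: H0| exact: H1]. Qed.
End Vec.

Ltac vext := apply: functional_extensionality => ?; rewrite /vsub /vadd /vscale /vzero; ring.

Section Deriv.
Variable d : nat.
Definition frL (H : vec d -> vec d) (y : vec d) (L : vec d -> vec d) :=
  forall eps, 0 < eps -> exists delta, 0 < delta /\ forall w,
    vnorm (vsub w y) < delta ->
    vnorm (vsub (vsub (H w) (H y)) (L (vsub w y))) <= eps * vnorm (vsub w y).
Definition bndL (L : vec d -> vec d) := exists K, 0 <= K /\ forall v, vnorm (L v) <= K * vnorm v.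

Lemma frL_cont H y L : frL H y L -> bndL L -> forall e, 0 < e -> exists delta, 0 < delta /\
  forall w, vnorm (vsub w y) < delta -> vnorm (vsub (H w) (H y)) < e.
Proof. move=> HL [K [HK0 HK]] e He. have [d1 [Hd1 H1]] := HL 1 Rlt_0_1.
have HD := Dd_nonneg d. set P := Dd d * (1 + K).
have HP : 0 <= P by rewrite /P; nra.
exists (Rmin d1 (e / (P + 1))); split.
 apply: Rmin_pos => //. apply: Rdiv_lt_0_compat; lra.
move=> w Hw. have Hw1 : vnorm (vsub w y) < d1 by have := Rmin_l d1 (e / (P + 1)); lra.
have Hw2 : vnorm (vsub w y) < e / (P + 1) by have := Rmin_r d1 (e / (P + 1)); lra.
set u := vsub w y.
have E : vsub (H w) (H y) = vadd (vsub (vsub (H w) (H y)) (L u)) (L u) by vext.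
rewrite E. apply: Rle_lt_trans (vnorm_add _ _) _.
have := H1 w Hw1; rewrite -/u => Hb. have := HK u => Hk.
have Hu := vnorm_nonneg u.
have Ee : e / (P+1) * (P+1) = e by field; lra.
have : vnorm u * (P + 1) < e by have := (Rmult_lt_compat_r (P+1) _ _ ltac:(lra) Hw2); rewrite Ee.
have : Dd d * (vnorm (vsub (vsub (H w) (H y)) (L u)) + vnorm (L u)) <= P * vnorm u.
 rewrite /P. have : vnorm (vsub (vsub (H w) (H y)) (L u)) + vnorm (L u) <= (1 + K) * vnorm u by lra.
 move=> h; have := Rmult_le_compat_l _ _ _ HD h; lra.
nra. Qed.

Lemma int_eq (a b : vec d) : int_vec a -> int_vec b -> (forall i, Rabs (a i - b i) < 1) -> a = b.
Proof. move=> Ha Hb H; apply: functional_extensionality => i.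
have [z1 E1] := Ha i; have [z2 E2] := Hb i. have := H i. rewrite E1 E2 -minus_IZR => Hl.
have : (z1 = z2)%Z.
 case: (Z.eq_dec z1 z2) => // Hn. exfalso.
 case: (Z_lt_le_dec (z1 - z2) 0) => Hc.
 - have : (z1 - z2 <= -1)%Z by lia. move/IZR_le. move: Hl; rewrite Rabs_left; [|apply: IZR_lt; lia]. lra.
 - have : (1 <= z1 - z2)%Z by lia. move/IZR_le. move: Hl; rewrite Rabs_right; [|apply: Rle_ge; apply: IZR_le; lia]. lra.
by move=> ->. Qed.

Definition homog (L : vec d -> vec d) := forall t v, L (vscale t v) = vscale t (L v).

Lemma frL_unique H1 H2 y L1 L2 : (forall w, int_vec (vsub (H1 w) (H2 w))) ->
  frL H1 y L1 -> frL H2 y L2 -> bndL L1 -> bndL L2 -> homog L1 -> homog L2 ->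
  forall v i, L1 v i = L2 v i.
Proof. move=> Hint F1 F2 B1 B2 Hh1 Hh2 v i.
have [c1 [Hc1 C1]] := frL_cont F1 B1 (ltac:(lra) : 0 < /2).
have [c2 [Hc2 C2]] := frL_cont F2 B2 (ltac:(lra) : 0 < /2).
have Hloc : forall w, vnorm (vsub w y) < Rmin c1 c2 -> vsub (H1 w) (H2 w) = vsub (H1 y) (H2 y).
 move=> w Hw. apply: int_eq => // j.
 have := C1 w ltac:(have := Rmin_l c1 c2; lra). have := C2 w ltac:(have := Rmin_r c1 c2; lra).
 move=> h2 h1. have g1 : Rabs (H1 w j - H1 y j) <= vnorm (vsub (H1 w) (H1 y)) := vnorm_comp _ j.
 have g2 : Rabs (H2 w j - H2 y j) <= vnorm (vsub (H2 w) (H2 y)) := vnorm_comp _ j.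
 rewrite /vsub.
 have -> : H1 w j - H2 w j - (H1 y j - H2 y j) = (H1 w j - H1 y j) + - (H2 w j - H2 y j) by ring.
 have := Rabs_triang (H1 w j - H1 y j) (- (H2 w j - H2 y j)). rewrite Rabs_Ropp. lra.
suff : forall i, vsub (L1 v) (L2 v) i = 0 by move=> h; have := h i; rewrite /vsub; lra.
apply: vnorm_small => e He.
have HD := Dd_nonneg d. have Hv := vnorm_nonneg v.
set eps := e / (2 * Dd d * (vnorm v + 1) + 1).
have Heps : 0 < eps by apply: Rdiv_lt_0_compat; nra.
have Heps2 : 2 * Dd d * eps * vnorm v <= e.
 have : eps * (2 * Dd d * (vnorm v + 1) + 1) = e by rewrite /eps; field; nra.
 nra.
have [e1 [He1 G1]] := F1 eps Heps. have [e2 [He2 G2]] := F2 eps Heps.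
set del := Rmin (Rmin e1 e2) (Rmin c1 c2).
have Hdel : 0 < del by repeat apply: Rmin_pos.
set t := del / (2 * (vnorm v + 1)).
have Ht : 0 < t by apply: Rdiv_lt_0_compat; nra.
have Htv : t * vnorm v < del.
 have : t * (2 * (vnorm v + 1)) = del by rewrite /t; field; nra. nra.
set w := vadd y (vscale t v).
have Hu : vsub w y = vscale t v by rewrite /w; vext.
have Hnu : vnorm (vsub w y) = t * vnorm v by rewrite Hu vnorm_scale Rabs_right; lra.
have Hd1 : del <= e1 by rewrite /del; have := Rmin_l (Rmin e1 e2) (Rmin c1 c2); have := Rmin_l e1 e2; lra.
have Hd2 : del <= e2 by rewrite /del; have := Rmin_l (Rmin e1 e2) (Rmin c1 c2); have := Rmin_r e1 e2; lra.
have Hd3 : del <= Rmin c1 c2 by rewrite /del; have := Rmin_r (Rmin e1 e2) (Rmin c1 c2); lra.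
have g1 := G1 w ltac:(lra). have g2 := G2 w ltac:(lra).
have Heq := Hloc w ltac:(lra).
have E : vscale t (vsub (L1 v) (L2 v)) =
   vsub (vsub (vsub (H2 w) (H2 y)) (L2 (vsub w y))) (vsub (vsub (H1 w) (H1 y)) (L1 (vsub w y))).
 rewrite Hu Hh1 Hh2. apply: functional_extensionality => j.
 have := congr1 (fun f => f j) Heq. rewrite /vsub /vscale /=. move=> h. lra.
have := vnorm_sub (vsub (vsub (H2 w) (H2 y)) (L2 (vsub w y))) (vsub (vsub (H1 w) (H1 y)) (L1 (vsub w y))).
rewrite -E vnorm_scale Rabs_right; last lra. rewrite Hnu in g1 g2. move=> h.
have : t * vnorm (vsub (L1 v) (L2 v)) <= t * e.
 apply: Rle_trans h _.
 have : Dd d * (vnorm (vsub (vsub (H2 w) (H2 y)) (L2 (vsub w y))) + vnorm (vsub (vsub (H1 w) (H1 y)) (L1 (vsub w y)))) <= Dd d * (2 * (eps * (t * vnorm v))).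
  apply: Rmult_le_compat_l => //; lra.
 nra.
move=> h2. apply: (Rmult_le_reg_l t) => //. Qed.
End Deriv.

Section Chain.
Variable d : nat.
Lemma frL_comp (F G : vec d -> vec d) y LA LB : frL F y LA -> frL G (F y) LB ->
  bndL LA -> bndL LB -> lin LB -> frL (fun w => G (F w)) y (fun u => LB (LA u)).
Proof. move=> FA FB [KA [HKA BA]] [KB [HKB BB]] HlB e He.
have HD := Dd_nonneg d. set P := Dd d * (1 + KA).
have HP : 0 <= P by rewrite /P; nra.
set e2 := e / (2 * (Dd d * P + 1)).
have He2 : 0 < e2 by apply: Rdiv_lt_0_compat; nra.
have He2b : Dd d * e2 * P <= e / 2.
 have : e2 * (2 * (Dd d * P + 1)) = e by rewrite /e2; field; nra. nra.
set e1 := Rmin 1 (e / (2 * (Dd d * KB + 1))).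
have He1 : 0 < e1 by apply: Rmin_pos; [lra| apply: Rdiv_lt_0_compat; nra].
have He1a : e1 <= 1 by apply: Rmin_l.
have He1b : Dd d * KB * e1 <= e / 2.
 have h : e1 <= e / (2 * (Dd d * KB + 1)) by apply: Rmin_r.
 have : e / (2 * (Dd d * KB + 1)) * (2 * (Dd d * KB + 1)) = e by field; nra. nra.
have [d1 [Hd1 G1]] := FA e1 He1. have [d2 [Hd2 G2]] := FB e2 He2.
exists (Rmin d1 (d2 / (P + 1))); split.
 apply: Rmin_pos => //. apply: Rdiv_lt_0_compat; lra.
move=> w Hw. have Hw1 : vnorm (vsub w y) < d1 by have := Rmin_l d1 (d2 / (P + 1)); lra.
have Hw2 : vnorm (vsub w y) < d2 / (P + 1) by have := Rmin_r d1 (d2 / (P + 1)); lra.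
set u := vsub w y. set h := vsub (F w) (F y).
have Hu := vnorm_nonneg u.
have g1 : vnorm (vsub h (LA u)) <= e1 * vnorm u := G1 w Hw1.
have Hh : vnorm h <= P * vnorm u.
 have E : h = vadd (vsub h (LA u)) (LA u) by vext.
 rewrite E. apply: Rle_trans (vnorm_add _ _) _. rewrite /P.
 have := BA u. have : vnorm (vsub h (LA u)) + vnorm (LA u) <= (1 + KA) * vnorm u by have := BA u; nra.
 move=> hh _; have := Rmult_le_compat_l _ _ _ HD hh; lra.
have Hh2 : vnorm (vsub (F w) (F y)) < d2.
 change (vnorm h < d2). have Ee : d2 / (P+1) * (P+1) = d2 by field; lra.
 have := (Rmult_lt_compat_r (P+1) _ _ ltac:(lra) Hw2); rewrite Ee. move=> hh. change (vnorm u * (P+1) < d2) in hh. nra.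
have g2 := G2 (F w) Hh2. rewrite -/h in g2.
have E : vsub (vsub (G (F w)) (G (F y))) (LB (LA u)) =
  vadd (vsub (vsub (G (F w)) (G (F y))) (LB h)) (LB (vsub h (LA u))).
 rewrite (lin_sub HlB). vext.
rewrite E. apply: Rle_trans (vnorm_add _ _) _.
have := BB (vsub h (LA u)) => g3.
have : vnorm (vsub (vsub (G (F w)) (G (F y))) (LB h)) + vnorm (LB (vsub h (LA u))) <= e2 * (P * vnorm u) + KB * (e1 * vnorm u).
 have := vnorm_nonneg h. have := vnorm_nonneg (vsub h (LA u)). nra.
move=> hh. have := Rmult_le_compat_l _ _ _ HD hh. nra. Qed.

Lemma frL_id (y : vec d) : frL (fun w => w) y (fun u => u).
Proof. move=> e He; exists 1; split => [|w _]; first lra.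
have E : vsub (vsub w y) (vsub w y) = vscale 0 w by vext.
rewrite E vnorm_scale Rabs_R0. have := vnorm_nonneg (vsub w y); nra. Qed.

Lemma bndL_mapply (A : mat d) : bndL (mapply A).
Proof. exact: mapply_bnd. Qed.
Lemma homog_lin (L : vec d -> vec d) : lin L -> homog L.
Proof. move=> HL t v. have E : forall v' : vec d, vscale t v' = vadd (vscale t v') (vscale 0 v') by move=> v'; vext.
by rewrite E HL -E. Qed.
Lemma bndL_comp (L1 L2 : vec d -> vec d) : bndL L1 -> bndL L2 -> bndL (fun u => L2 (L1 u)).
Proof. move=> [K1 [H1 B1]] [K2 [H2 B2]]; exists (K2 * K1); split; first nra.
move=> v; have := B2 (L1 v); have := B1 v; have := vnorm_nonneg v; nra. Qed.
End Chain.

Section Torus.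
Variable d : nat.
Variables (F G : vec d -> vec d) (DF DG : vec d -> mat d) (x : vec d).

Lemma torbit_pos n : torbit F G x (Z.of_nat n) = iter n F x.
Proof. case: n => [|n] //=. by rewrite SuccNat2Pos.id_succ. Qed.
Lemma torbit_neg n : torbit F G x (- Z.of_nat n) = iter n G x.
Proof. case: n => [|n] //=. by rewrite SuccNat2Pos.id_succ. Qed.

Lemma orb_succ k : (0 <= k)%Z -> torbit F G x (k + 1) = F (torbit F G x k).
Proof. move=> Hk. have [n ->] : exists n, k = Z.of_nat n by exists (Z.to_nat k); lia.
have -> : (Z.of_nat n + 1 = Z.of_nat n.+1)%Z by lia. by rewrite !torbit_pos. Qed.
Lemma orb_pred k : (k < 0)%Z -> torbit F G x k = G (torbit F G x (k + 1)).
Proof. move=> Hk. have [n ->] : exists n, k = (- Z.of_nat n.+1)%Z by exists (Z.to_nat (- k - 1)); lia.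
have -> : (- Z.of_nat n.+1 + 1 = - Z.of_nat n)%Z by lia. by rewrite !torbit_neg. Qed.

Hypothesis HT : torus_C1_diffeo F DF G DG.

Lemma GF_id y v : mapply (DG (F y)) (mapply (DF y) v) = v.
Proof. case: HT => [[HF _] [[HG _] [_ [_ [HGF _]]]]].
apply: functional_extensionality => i.
apply: (@frL_unique d (fun w => G (F w)) (fun w => w) y (fun u => mapply (DG (F y)) (mapply (DF y) u)) (fun u => u)).
- move=> w; exact: HGF.
- apply: frL_comp. exact: HF. exact: HG. exact: mapply_bnd. exact: mapply_bnd. exact: lin_mapply.
- exact: frL_id.
- apply: bndL_comp; exact: mapply_bnd.
- exists 1; split => [|v']; lra.
- apply: homog_lin. apply: lin_comp; exact: lin_mapply.
- move=> t v'; by [].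
Qed.

Lemma DG_trans y z v : int_vec z -> mapply (DG (vadd y z)) v = mapply (DG y) v.
Proof. case: HT => [_ [[HG _] [_ [HGt _]]]] Hz.
apply: functional_extensionality => i.
apply: (@frL_unique d (fun w => G (vadd w z)) G y).
- move=> w. apply: HGt. rewrite /teq. have -> : vsub (vadd w z) w = z by vext. exact: Hz.
- move=> e He. have [dl [Hdl H]] := HG (vadd y z) e He. exists dl; split => // w Hw.
  have E : vsub (vadd w z) (vadd y z) = vsub w y by vext.
  have := H (vadd w z). rewrite E. by apply.
- exact: HG.
- exact: mapply_bnd.
- exact: mapply_bnd.
- apply: homog_lin; exact: lin_mapply.
- apply: homog_lin; exact: lin_mapply.
Qed.

Lemma BA_id k w : mapply (DG (torbit F G x (k + 1))) (mapply (DF (torbit F G x k)) w) = w.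
Proof. case: (Z_lt_le_dec k 0) => Hk.
- rewrite (orb_pred Hk). set y := torbit F G x (k + 1).
  case: HT => [_ [_ [_ [_ [_ HFG]]]]].
  set z := vsub (F (G y)) y.
  have Hz : int_vec z := HFG y.
  have E : F (G y) = vadd y z by rewrite /z; vext.
  rewrite -(@DG_trans y z (mapply (DF (G y)) w) Hz) -E. exact: GF_id.
- rewrite (orb_succ Hk). exact: GF_id.
Qed.
End Torus.

Lemma exp_nat a j : exp (a * INR j) = exp a ^ j.
Proof. elim: j => [|j IH]. by rewrite /= Rmult_0_r exp_0.
rewrite S_INR Rmult_plus_distr_l exp_plus IH Rmult_1_r /=. ring. Qed.

Lemma abs_minus_nat k j : Rabs (IZR (k - Z.of_nat j)) <= Rabs (IZR k) + INR j.
Proof. rewrite minus_IZR INR_IZR_INZ. have := Rabs_triang (IZR k) (- IZR (Z.of_nat j)).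
rewrite Rabs_Ropp (Rabs_right (IZR (Z.of_nat j))). rewrite /Rminus; lra. rewrite -INR_IZR_INZ; apply: Rle_ge; exact: pos_INR. Qed.
Lemma abs_plus_nat k j : Rabs (IZR (k + Z.of_nat j)) <= Rabs (IZR k) + INR j.
Proof. rewrite plus_IZR INR_IZR_INZ. have := Rabs_triang (IZR k) (IZR (Z.of_nat j)).
rewrite (Rabs_right (IZR (Z.of_nat j))). lra. rewrite -INR_IZR_INZ; apply: Rle_ge; exact: pos_INR. Qed.

Lemma exp_le x y : x <= y -> exp x <= exp y.
Proof. case/Rle_lt_or_eq_dec => H. left; exact: exp_increasing. by rewrite H; right. Qed.


Section Hyp.
Variable d : nat.
Variables (DF DG : vec d -> mat d) (orb : Z -> vec d) (Es Eu : Z -> vec d -> Prop).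
Hypothesis Hsp : forall k, splitting (Es k) (Eu k).
Hypothesis HinvS : forall k v, Es (k + 1)%Z v <-> exists w, Es k w /\ v = mapply (DF (orb k)) w.
Hypothesis HinvU : forall k v, Eu (k + 1)%Z v <-> exists w, Eu k w /\ v = mapply (DF (orb k)) w.
Hypothesis HBA : forall k w, mapply (DG (orb (k + 1)%Z)) (mapply (DF (orb k)) w) = w.

Local Notation A k := (mapply (DF (orb k))).
Local Notation B k := (mapply (DG (orb k))).

Lemma sub_sub (E : vec d -> Prop) : is_subspace E -> forall u v, E u -> E v -> E (vsub u v).
Proof. move=> [_ [Ha Hs]] u v Hu Hv. have -> : vsub u v = vadd u (vscale (-1) v) by vext.
apply: Ha => //; exact: Hs. Qed.
Lemma sub_lc (E : vec d -> Prop) : is_subspace E -> forall a b u v, E u -> E v ->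
  E (vadd (vscale a u) (vscale b v)).
Proof. move=> [_ [Ha Hs]] a b u v Hu Hv. apply: Ha; exact: Hs. Qed.

Lemma proj_ex k v : exists s, Es k s /\ Eu k (vsub v s).
Proof. have [_ [_ [_ H]]] := Hsp k. have [s [u [Hs [Hu ->]]]] := H v.
exists s; split => //. have -> : vsub (vadd s u) s = u by vext. done. Qed.

Definition pS k v : vec d := proj1_sig (constructive_indefinite_description _ (proj_ex k v)).
Definition pU k v : vec d := vsub v (pS k v).
Lemma pS_spec k v : Es k (pS k v) /\ Eu k (pU k v).
Proof. rewrite /pU /pS. exact: proj2_sig (constructive_indefinite_description _ (proj_ex k v)). Qed.

Lemma pS_char k v s : Es k s -> Eu k (vsub v s) -> pS k v = s.
Proof. move=> Hs Hu. have [H1 H2] := pS_spec k v. have [SS [SU [Hi _]]] := Hsp k.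
have E : vsub (pS k v) s = @vzero d.
 apply: Hi. exact: sub_sub. have -> : vsub (pS k v) s = vsub (vsub v s) (pU k v) by rewrite /pU; vext.
 exact: sub_sub.
apply: functional_extensionality => i. have := congr1 (fun f => f i) E. rewrite /vsub /vzero /=. lra. Qed.

Lemma pS_lin k : lin (pS k).
Proof. move=> a b u v. have [SS [SU _]] := Hsp k. apply: pS_char.
 apply: sub_lc => //; apply pS_spec.
have -> : vsub (vadd (vscale a u) (vscale b v)) (vadd (vscale a (pS k u)) (vscale b (pS k v)))
  = vadd (vscale a (pU k u)) (vscale b (pU k v)) by rewrite /pU; vext.
apply: sub_lc => //; apply pS_spec. Qed.

Lemma A_Es k w : Es (k - 1)%Z w -> Es k (A (k - 1)%Z w).
Proof. move=> H. have := (HinvS (k - 1) (A (k - 1)%Z w)).2. have -> : (k - 1 + 1 = k)%Z by lia.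
apply. by exists w. Qed.
Lemma A_Eu k w : Eu (k - 1)%Z w -> Eu k (A (k - 1)%Z w).
Proof. move=> H. have := (HinvU (k - 1) (A (k - 1)%Z w)).2. have -> : (k - 1 + 1 = k)%Z by lia.
apply. by exists w. Qed.

Lemma pS_Gamma k v w : pS k (vsub v (A (k - 1)%Z w)) = vsub (pS k v) (A (k - 1)%Z (pS (k - 1) w)).
Proof. have [SS [SU _]] := Hsp k. apply: pS_char.
 apply: sub_sub => //. apply pS_spec. apply: A_Es; apply pS_spec.
have -> : vsub (vsub v (A (k - 1)%Z w)) (vsub (pS k v) (A (k - 1)%Z (pS (k - 1) w)))
  = vsub (pU k v) (A (k - 1)%Z (pU (k - 1) w)).
 rewrite /pU (lin_sub (lin_mapply _)). vext.
apply: sub_sub => //. apply pS_spec. apply: A_Eu; apply pS_spec. Qed.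

Lemma pU_Gamma k v w : pU k (vsub v (A (k - 1)%Z w)) = vsub (pU k v) (A (k - 1)%Z (pU (k - 1) w)).
Proof. rewrite /pU pS_Gamma. rewrite [in RHS](lin_sub (lin_mapply _)). vext. Qed.

Lemma pU_lin k : lin (pU k).
Proof. move=> a b u v. rewrite /pU pS_lin. vext. Qed.

Lemma dfpow_lin k j : lin (dfpow DF orb k j).
Proof. elim: j => [|j IH] /=. move=> a b u v; done. apply: lin_comp => //. exact: lin_mapply. Qed.
Lemma dfneg_lin k j : lin (dfneg DG orb k j).
Proof. elim: j => [|j IH] /=. move=> a b u v; done. apply: lin_comp => //. exact: lin_mapply. Qed.

Lemma dfpow_shift k j v : dfpow DF orb k j.+1 v = dfpow DF orb (k + 1) j (A k v).
Proof. elim: j => [|j IH]. by rewrite /= Z.add_0_r.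
change (dfpow DF orb k j.+2 v) with (mapply (DF (orb (k + Z.of_nat j.+1)%Z)) (dfpow DF orb k j.+1 v)).
rewrite IH. change (dfpow DF orb (k+1) j.+1 (A k v)) with (mapply (DF (orb (k + 1 + Z.of_nat j)%Z)) (dfpow DF orb (k+1) j (A k v))).
have -> : (k + Z.of_nat j.+1 = k + 1 + Z.of_nat j)%Z by lia. done. Qed.
Lemma dfneg_shift k j v : dfneg DG orb k j.+1 v = dfneg DG orb (k - 1) j (B k v).
Proof. elim: j => [|j IH]. by rewrite /= Z.sub_0_r.
change (dfneg DG orb k j.+2 v) with (mapply (DG (orb (k - Z.of_nat j.+1)%Z)) (dfneg DG orb k j.+1 v)).
rewrite IH. change (dfneg DG orb (k-1) j.+1 (B k v)) with (mapply (DG (orb (k - 1 - Z.of_nat j)%Z)) (dfneg DG orb (k-1) j (B k v))).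
have -> : (k - Z.of_nat j.+1 = k - 1 - Z.of_nat j)%Z by lia. done. Qed.

Lemma Eu_B l w : Eu l w -> Eu (l - 1)%Z (B l w) /\ A (l - 1)%Z (B l w) = w.
Proof. move=> H. have := (HinvU (l - 1) w).1. have -> : (l - 1 + 1 = l)%Z by lia.
move=> /(_ H) [w' [Hw' ->]]. have := HBA (l - 1) w'. have -> : (l - 1 + 1 = l)%Z by lia.
move=> ->. done. Qed.

Lemma dfneg_Eu l j w : Eu l w -> Eu (l - Z.of_nat j)%Z (dfneg DG orb l j w).
Proof. move=> H; elim: j => [|j IH]. by rewrite /= Z.sub_0_r.
rewrite /=. have := (Eu_B IH).1. have -> : (l - Z.of_nat j - 1 = l - Z.of_nat j.+1)%Z by lia. done. Qed.

Definition ts (eta : seqv d) k j : vec d :=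
  dfpow DF orb (k - Z.of_nat j) j (pS (k - Z.of_nat j) (eta (k - Z.of_nat j)%Z)).
Definition tu (eta : seqv d) k j : vec d :=
  dfneg DG orb (k + Z.of_nat j) j (pU (k + Z.of_nat j) (eta (k + Z.of_nat j)%Z)).
Definition Ups (eta : seqv d) : seqv d := fun k i =>
  Series (fun j => ts eta k j i) - Series (fun j => tu eta k j.+1 i).
Definition conv (eta : seqv d) := forall k i,
  ex_series (fun j => ts eta k j i) /\ ex_series (fun j => tu eta k j i).

Lemma conv_tu1 eta k i : conv eta -> ex_series (fun j => tu eta k j.+1 i).
Proof. move=> H. exact: (proj1 (ex_series_incr_1 (fun j => tu eta k j i)) (proj2 (H k i))). Qed.

Lemma Ups_lin eta eta' a b : conv eta -> conv eta' -> forall k i,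
  Ups (fun k => vadd (vscale a (eta k)) (vscale b (eta' k))) k i = a * Ups eta k i + b * Ups eta' k i.
Proof. move=> H1 H2 k i. rewrite /Ups.
rewrite (Series_ext _ (fun j => a * ts eta k j i + b * ts eta' k j i)); last first.
 move=> j. rewrite /ts pS_lin dfpow_lin. done.
rewrite (Series_ext (fun j => tu _ k j.+1 i) (fun j => a * tu eta k j.+1 i + b * tu eta' k j.+1 i)); last first.
 move=> j. rewrite /tu pU_lin dfneg_lin. done.
rewrite !Series_plus; try (apply: exs_scal; first [exact: conv_tu1| exact: (proj1 (H1 k i)) | exact: (proj1 (H2 k i))]).
rewrite !Series_scal_l. ring. Qed.

Lemma ts_Gamma eta k j : ts (GammaOp DF orb eta) k j = vsub (ts eta k j) (ts eta k j.+1).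
Proof. rewrite /ts /GammaOp pS_Gamma (lin_sub (dfpow_lin _ _)).
have -> : (k - Z.of_nat j.+1 = k - Z.of_nat j - 1)%Z by lia.
rewrite dfpow_shift. have -> : (k - Z.of_nat j - 1 + 1 = k - Z.of_nat j)%Z by lia. done. Qed.

Lemma tu_Gamma eta k j : tu (GammaOp DF orb eta) k j.+1 = vsub (tu eta k j.+1) (tu eta k j).
Proof. rewrite /tu /GammaOp pU_Gamma (lin_sub (dfneg_lin _ _)).
rewrite (dfneg_shift (k + Z.of_nat j.+1) j (A _ _)). have := HBA (k + Z.of_nat j.+1 - 1). have -> : (k + Z.of_nat j.+1 - 1 + 1 = k + Z.of_nat j.+1)%Z by lia.
move=> ->. have -> : (k + Z.of_nat j.+1 - 1 = k + Z.of_nat j)%Z by lia. done. Qed.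

Lemma ts0 eta k : ts eta k 0 = pS k (eta k).
Proof. by rewrite /ts /= Z.sub_0_r. Qed.
Lemma tu0 eta k : tu eta k 0 = pU k (eta k).
Proof. by rewrite /tu /= Z.add_0_r. Qed.

Lemma Ups_Gamma eta : conv eta -> forall k i, Ups (GammaOp DF orb eta) k i = eta k i.
Proof. move=> H k i. have [Hs Hu] := H k i. have Hu1 := conv_tu1 k i H.
have Hs1 := proj1 (ex_series_incr_1 (fun j => ts eta k j i)) Hs.
rewrite /Ups.
rewrite (Series_ext _ (fun j => ts eta k j i - ts eta k j.+1 i)); last by move=> j; rewrite ts_Gamma.
rewrite (Series_ext (fun j => tu _ k j.+1 i) (fun j => tu eta k j.+1 i - tu eta k j i)); last by move=> j; rewrite tu_Gamma.
rewrite !Series_minus // (Series_incr_1 _ Hs) (Series_incr_1 _ Hu) ts0 tu0 /pU /vsub. ring. Qed.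

Lemma mapply_series (M : mat d) (f : nat -> vec d) i : (forall l, ex_series (fun j => f j l)) ->
  mapply M (fun l => Series (fun j => f j l)) i = Series (fun j => mapply M (f j) i).
Proof. move=> H. rewrite /mapply !rsumE.
rewrite (@lsum_series _ _ (fun j l => M i l * f j l)); last by move=> l; apply: exs_scal.
apply: lsum_ext => l. by rewrite Series_scal_l. Qed.

Lemma A_ts eta k j : A (k - 1)%Z (ts eta (k - 1) j) = ts eta k j.+1.
Proof. rewrite /ts /=. have -> : (k - Z.of_nat j.+1 = k - 1 - Z.of_nat j)%Z by lia.
have -> : (k - 1 - Z.of_nat j + Z.of_nat j = k - 1)%Z by lia. done. Qed.

Lemma A_tu eta k j : A (k - 1)%Z (tu eta (k - 1) j.+1) = tu eta k j.
Proof. rewrite /tu /=. have -> : (k - 1 + Z.of_nat j.+1 = k + Z.of_nat j)%Z by lia.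
have -> : (k + Z.of_nat j - Z.of_nat j = k)%Z by lia.
have Hw : Eu k (dfneg DG orb (k + Z.of_nat j) j (pU (k + Z.of_nat j) (eta (k + Z.of_nat j)%Z))).
 have := dfneg_Eu j (proj2 (pS_spec (k + Z.of_nat j) (eta (k + Z.of_nat j)%Z))).
 have -> : (k + Z.of_nat j - Z.of_nat j = k)%Z by lia. done.
exact: (Eu_B Hw).2. Qed.

Lemma Gamma_Ups eta : conv eta -> forall k i, GammaOp DF orb (Ups eta) k i = eta k i.
Proof. move=> H k i. rewrite /GammaOp /vsub.
have E : Ups eta (k - 1)%Z = vsub (fun l => Series (fun j => ts eta (k - 1) j l)) (fun l => Series (fun j => tu eta (k - 1) j.+1 l)).
 by apply: functional_extensionality.
rewrite E (lin_sub (lin_mapply _)) /vsub.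
rewrite !mapply_series; try (move=> l; first [exact: (proj1 (H _ l)) | exact: (conv_tu1 _ _ H)]).
rewrite (Series_ext _ (fun j => ts eta k j.+1 i)); last by move=> j; rewrite A_ts.
rewrite (Series_ext (fun j => mapply _ (tu _ _ _) i) (fun j => tu eta k j i)); last by move=> j; rewrite A_tu.
have [Hs Hu] := H k i.
rewrite /Ups (Series_incr_1 _ Hs) (Series_incr_1 _ Hu) ts0 tu0 /pU /vsub. ring. Qed.

Variables (lam eps c a b : R).
Hypotheses (Hlam : 0 <= lam) (Hc : 1 <= c) (Heps : 0 <= eps) (Hb : 0 <= b)
  (Hab : 2 * eps + b <= a) (Hq : lam * exp a < 1).

Lemma key_exp L K j : 0 <= L -> 0 <= K -> L <= K + INR j ->
  exp (eps * L) * (exp (eps * L) * exp (b * L)) <= exp (a * K) * exp a ^ j.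
Proof. move=> HL HK HLK. rewrite -!exp_plus -exp_nat -exp_plus.
apply: exp_le. have Ha : 0 <= a by lra. have := pos_INR j. nra. Qed.
Lemma key_exp0 L : 0 <= L -> exp (eps * L) * exp (b * L) <= exp (a * L).
Proof. move=> HL. rewrite -exp_plus. apply: exp_le. nra. Qed.


Hypothesis HS : forall (k : Z) (j : nat), (0 < j)%nat -> forall v, Es k v ->
  vnorm (dfpow DF orb k j v) <= c * lam ^ j * exp (eps * Rabs (IZR k)) * vnorm v.
Hypothesis HU : forall (k : Z) (j : nat), (0 < j)%nat -> forall v, Eu k v ->
  vnorm (dfneg DG orb k j v) <= c * lam ^ j * exp (eps * Rabs (IZR k)) * vnorm v.
Hypothesis HDc : forall (k : Z) v s u, Es k s -> Eu k u -> v = vadd s u ->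
  vnorm s <= c * exp (eps * Rabs (IZR k)) * vnorm v /\
  vnorm u <= c * exp (eps * Rabs (IZR k)) * vnorm v.

Lemma pS_bnd k v : vnorm (pS k v) <= c * exp (eps * Rabs (IZR k)) * vnorm v.
Proof. have [H1 H2] := pS_spec k v. apply: (proj1 (HDc H1 H2 _)). rewrite /pU; vext. Qed.
Lemma pU_bnd k v : vnorm (pU k v) <= c * exp (eps * Rabs (IZR k)) * vnorm v.
Proof. have [H1 H2] := pS_spec k v. apply: (proj2 (HDc H1 H2 _)). rewrite /pU; vext. Qed.

Definition qq := lam * exp a.

Lemma chain_bnd (w s : vec d) (v : vec d) L K j C :
  0 <= L -> 0 <= K -> L <= K + INR j -> 0 <= C ->
  vnorm w <= c * lam ^ j * exp (eps * L) * vnorm s ->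
  vnorm s <= c * exp (eps * L) * vnorm v ->
  vnorm v <= C * exp (b * L) ->
  vnorm w <= c ^ 2 * C * exp (a * K) * qq ^ j.
Proof. move=> HL HK HLK HC H1 H2 H3.
have Hlj : 0 <= lam ^ j by apply: pow_le.
have E1 := exp_pos (eps * L). have E2 := exp_pos (b * L).
have Hs : vnorm s <= c * exp (eps * L) * (C * exp (b * L)).
 apply: Rle_trans H2 _. apply: Rmult_le_compat_l => //. have := exp_pos (eps*L); nra.
have Hw : vnorm w <= c * lam ^ j * exp (eps * L) * (c * exp (eps * L) * (C * exp (b * L))).
 apply: Rle_trans H1 _. apply: Rmult_le_compat_l => //. apply: Rmult_le_pos; [apply: Rmult_le_pos|]; lra.
apply: Rle_trans Hw _. have Hk := key_exp HL HK HLK.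
rewrite /qq Rpow_mult_distr.
have -> : c * lam ^ j * exp (eps * L) * (c * exp (eps * L) * (C * exp (b * L)))
  = (c ^ 2 * C * lam ^ j) * (exp (eps * L) * (exp (eps * L) * exp (b * L))) by ring.
have -> : c ^ 2 * C * exp (a * K) * (lam ^ j * exp a ^ j) = (c ^ 2 * C * lam ^ j) * (exp (a * K) * exp a ^ j) by ring.
apply: Rmult_le_compat_l => //. have : 0 <= c ^ 2 by nra. move=> h; have := Rmult_le_pos _ _ h HC; nra. Qed.

Lemma ts_bnd eta C : 0 <= C -> (forall k, vnorm (eta k) <= C * exp (b * Rabs (IZR k))) ->
  forall k j, vnorm (ts eta k j) <= c ^ 2 * C * exp (a * Rabs (IZR k)) * qq ^ j.
Proof. move=> HC He k j. have Hk := Rabs_pos (IZR k).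
case: j => [|j].
- rewrite ts0. apply: Rle_trans (pS_bnd _ _) _.
  have h1 := He k. have E1 := exp_pos (eps * Rabs (IZR k)).
  have : c * exp (eps * Rabs (IZR k)) * vnorm (eta k) <= c * exp (eps * Rabs (IZR k)) * (C * exp (b * Rabs (IZR k))).
   apply: Rmult_le_compat_l => //. nra.
  have h2 := key_exp0 Hk. have E3 := exp_pos (b * Rabs (IZR k)).
  rewrite /= Rmult_1_r. move=> h3. apply: Rle_trans h3 _.
  have -> : c * exp (eps * Rabs (IZR k)) * (C * exp (b * Rabs (IZR k))) = (c * C) * (exp (eps * Rabs (IZR k)) * exp (b * Rabs (IZR k))) by ring.
  have -> : c ^ 2 * C * exp (a * Rabs (IZR k)) = (c ^ 2 * C) * exp (a * Rabs (IZR k)) by ring.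
  apply: Rle_trans (_ : (c * C) * exp (a * Rabs (IZR k)) <= _).
   apply: Rmult_le_compat_l => //. nra.
  apply: Rmult_le_compat_r. left; exact: exp_pos.
  have h : 0 <= (c - 1) * (c * C) by apply: Rmult_le_pos; nra. nra.
- rewrite /ts. set l := (k - Z.of_nat j.+1)%Z.
  apply: (@chain_bnd _ (pS l (eta l)) (eta l) (Rabs (IZR l))).
  + exact: Rabs_pos.
  + exact: Hk.
  + exact: abs_minus_nat.
  + done.
  + apply: HS => //. apply pS_spec.
  + exact: pS_bnd.
  + exact: He.
Qed.

Lemma tu_bnd eta C : 0 <= C -> (forall k, vnorm (eta k) <= C * exp (b * Rabs (IZR k))) ->
  forall k j, vnorm (tu eta k j) <= c ^ 2 * C * exp (a * Rabs (IZR k)) * qq ^ j.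
Proof. move=> HC He k j. have Hk := Rabs_pos (IZR k).
case: j => [|j].
- rewrite tu0. apply: Rle_trans (pU_bnd _ _) _.
  have h1 := He k. have E1 := exp_pos (eps * Rabs (IZR k)).
  have : c * exp (eps * Rabs (IZR k)) * vnorm (eta k) <= c * exp (eps * Rabs (IZR k)) * (C * exp (b * Rabs (IZR k))).
   apply: Rmult_le_compat_l => //. nra.
  have h2 := key_exp0 Hk. have E3 := exp_pos (b * Rabs (IZR k)).
  rewrite /= Rmult_1_r. move=> h3. apply: Rle_trans h3 _.
  have -> : c * exp (eps * Rabs (IZR k)) * (C * exp (b * Rabs (IZR k))) = (c * C) * (exp (eps * Rabs (IZR k)) * exp (b * Rabs (IZR k))) by ring.
  have -> : c ^ 2 * C * exp (a * Rabs (IZR k)) = (c ^ 2 * C) * exp (a * Rabs (IZR k)) by ring.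
  apply: Rle_trans (_ : (c * C) * exp (a * Rabs (IZR k)) <= _).
   apply: Rmult_le_compat_l => //. nra.
  apply: Rmult_le_compat_r. left; exact: exp_pos.
  have h : 0 <= (c - 1) * (c * C) by apply: Rmult_le_pos; nra. nra.
- rewrite /tu. set l := (k + Z.of_nat j.+1)%Z.
  apply: (@chain_bnd _ (pU l (eta l)) (eta l) (Rabs (IZR l))).
  + exact: Rabs_pos.
  + exact: Hk.
  + exact: abs_plus_nat.
  + done.
  + apply: HU => //. apply pS_spec.
  + exact: pU_bnd.
  + exact: He.
Qed.

Lemma series_bnd (f : nat -> vec d) M : 0 <= qq -> (forall j, vnorm (f j) <= M * qq ^ j) ->
  forall i, ex_series (fun j => f j i) /\ Rabs (Series (fun j => f j i)) <= M / (1 - qq).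
Proof. move=> Hq0 Hf i. have Hq1 : qq < 1 by rewrite /qq.
have Hg : ex_series (fun j => M * qq ^ j).
 apply: exs_scal. apply: ex_series_geom. rewrite Rabs_right; lra.
have Hb1 : forall j, Rabs (f j i) <= M * qq ^ j.
 move=> j; apply: Rle_trans (vnorm_comp _ i) (Hf j).
have He : ex_series (fun j => f j i) by apply: exs_le Hb1 Hg.
split => //.
have Ha : ex_series (fun j => Rabs (f j i)).
 apply: (exs_le (b := fun j => M * qq ^ j)) => // j. rewrite Rabs_Rabsolu. exact: Hb1.
apply: Rle_trans (Series_Rabs _ Ha) _.
apply: Rle_trans (Series_le _ _ _ Hg) _.
 move=> j; split; [exact: Rabs_pos| exact: Hb1].
rewrite Series_scal_l Series_geom. right; rewrite /Rdiv; ring. rewrite Rabs_right; lra. Qed.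

Lemma est eta C : 0 <= C -> (forall k, vnorm (eta k) <= C * exp (b * Rabs (IZR k))) ->
  conv eta /\ forall k, vnorm (Ups eta k) <= (2 * (c ^ 2 * C * exp (a * Rabs (IZR k))) / (1 - qq)) * Dd d.
Proof. move=> HC He. have Hq0 : 0 <= qq by rewrite /qq; have := exp_pos a; nra.
have Hqq : qq < 1 by rewrite /qq.
have Bs := fun k => series_bnd Hq0 (ts_bnd HC He k).
have Bu := fun k => series_bnd Hq0 (tu_bnd HC He k).
have Bu1 : forall k, forall i, ex_series (fun j => tu eta k j.+1 i) /\ Rabs (Series (fun j => tu eta k j.+1 i)) <= c ^ 2 * C * exp (a * Rabs (IZR k)) / (1 - qq).
 move=> k. apply: (series_bnd (f := fun j => tu eta k j.+1)) => // j.
 apply: Rle_trans (tu_bnd HC He k j.+1) _. rewrite /=.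
 have : 0 <= c ^ 2 * C * exp (a * Rabs (IZR k)) * qq ^ j.
  apply: Rmult_le_pos; [|exact: pow_le]. apply: Rmult_le_pos; [|left; exact: exp_pos]. have : 0 <= c^2 by nra. nra.
 nra.
split. move=> k i; split; [exact: (proj1 (Bs k i)) | exact: (proj1 (Bu k i))].
move=> k. apply: vnorm_bnd => i. rewrite /Ups.
have := proj2 (Bs k i). have := proj2 (Bu1 k i).
have := Rabs_triang (Series (fun j => ts eta k j i)) (- Series (fun j => tu eta k j.+1 i)).
rewrite Rabs_Ropp /Rminus /Rdiv. lra. Qed.
End Hyp.

Lemma wt_inv (x v C : R) : exp (- x) * v <= C -> v <= C * exp x.
Proof. move=> H. have E : exp (- x) * exp x = 1 by rewrite -exp_plus Rplus_opp_l exp_0.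
have Hx := exp_pos x. have := Rmult_le_compat_r (exp x) _ _ (Rlt_le _ _ Hx) H.
have -> : exp (- x) * v * exp x = v * (exp (- x) * exp x) by ring. rewrite E. lra. Qed.

Lemma wexp_eq (n : nat) (k : Z) : - Rabs (IZR k) / INR n = - (/ INR n * Rabs (IZR k)).
Proof. rewrite /Rdiv; ring. Qed.

Lemma inX_bnd d n (eta : seqv d) : inX n eta -> exists C, 0 <= C /\
  forall k, vnorm (eta k) <= C * exp (/ INR n * Rabs (IZR k)).
Proof. move=> [C HC]. exists C; split.
 have := HC 0%Z. have := exp_pos (- Rabs (IZR 0) / INR n). have := vnorm_nonneg (eta 0%Z). nra.
move=> k; apply: wt_inv. rewrite -wexp_eq. exact: HC. Qed.

Lemma wnorm_lub d n (eta : seqv d) : inX n eta -> is_lub (wset n eta) (wnorm n eta).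
Proof. move=> [C HC]. rewrite /wnorm. apply: epsilon_spec.
have Hb : bound (wset n eta) by exists C => r [k ->]; exact: HC.
have Hne : exists r, wset n eta r.
 exists (exp (- Rabs (IZR 0) / INR n) * vnorm (eta 0%Z)). by exists 0%Z.
have [s Hs] := @completeness (wset n eta) Hb Hne. by exists s. Qed.

Lemma wnorm_ub d n (eta : seqv d) : inX n eta -> forall k,
  exp (- Rabs (IZR k) / INR n) * vnorm (eta k) <= wnorm n eta.
Proof. move=> H k. apply: (proj1 (wnorm_lub H)). by exists k. Qed.
Lemma wnorm_least d n (eta : seqv d) M : inX n eta ->
  (forall k, exp (- Rabs (IZR k) / INR n) * vnorm (eta k) <= M) -> wnorm n eta <= M.
Proof. move=> H HM. apply: (proj2 (wnorm_lub H)) => r [k ->]. exact: HM. Qed.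

Lemma wt_fwd (x v M : R) : v <= M * exp x -> exp (- x) * v <= M.
Proof. move=> H. have E : exp (- x) * exp x = 1 by rewrite -exp_plus Rplus_opp_l exp_0.
have Hx := exp_pos (- x). have := Rmult_le_compat_l _ _ _ (Rlt_le _ _ Hx) H.
have -> : exp (- x) * (M * exp x) = M * (exp (- x) * exp x) by ring. rewrite E. lra. Qed.

Theorem lemma3p6 (d : nat) (F G : vec d -> vec d) (DF DG : vec d -> mat d)
  (x : vec d) (lam : R) :
  torus_C1_diffeo F DF G DG ->
  0 < lam < 1 ->
  regularly_hyperbolic DF DG (torbit F G x) lam ->
  forall n m : nat, (0 < m)%nat -> (m < n)%nat -> INR n > 1 / ln (1 / lam) ->
  exists Ups : seqv d -> seqv d,
    (* Ups maps X_n into X_m *)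
    (forall eta, inX n eta -> inX m (Ups eta)) /\
    (* linear on X_n *)
    (forall eta eta' (a b : R), inX n eta -> inX n eta' ->
       forall k i, Ups (fun k => vadd (vscale a (eta k)) (vscale b (eta' k))) k i
                   = a * Ups eta k i + b * Ups eta' k i) /\
    (* continuous X_n -> X_m *)
    (forall eta, inX n eta -> forall eps, 0 < eps -> exists delta, 0 < delta /\
       forall eta', inX n eta' ->
         wnorm n (fun k => vsub (eta' k) (eta k)) < delta ->
         wnorm m (fun k => vsub (Ups eta' k) (Ups eta k)) < eps) /\
    (forall eta, inX n eta ->
       forall k i, Ups (GammaOp DF (torbit F G x) eta) k i = eta k i) /\
    (forall eta, inX n eta ->
       forall k i, GammaOp DF (torbit F G x) (Ups eta) k i = eta k i).
Proof.
move=> HT [Hl0 Hl1] [Es [Eu [Hsp [HinvS [HinvU [eps0 [Heps0 Hh]]]]]]] n m Hm Hmn Hn.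
set orb := torbit F G x.
have HBA : forall k w, mapply (DG (orb (k+1)%Z)) (mapply (DF (orb k)) w) = w := BA_id x HT.
have Hmn' : (m < n)%coq_nat by apply/ltP.
have Hm' : (0 < m)%coq_nat by apply/ltP.
have HnR : 0 < INR n by apply: lt_0_INR; lia.
have HmR : 0 < INR m by apply: lt_0_INR; lia.
have HmnR : INR m < INR n by apply: lt_INR.
set bb := / INR n.
have Hb0 : 0 <= bb by left; apply: Rinv_0_lt_compat.
have Hbm : bb < / INR m by apply: Rinv_lt_contravar; nra.
have Hil : 1 < 1 / lam. have : 1 / lam * lam = 1 by field; lra. nra.
set lnl := ln (1 / lam).
have Hlnl : 0 < lnl by rewrite /lnl -ln_1; apply: ln_increasing; lra.
have Hbl : bb < lnl.
 have E1 : 1 / lnl * lnl = 1 by field; lra.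
 have E2 : bb * INR n = 1 by rewrite /bb; field; lra.
 have h1 : INR n * lnl > 1.
  have := Rmult_lt_compat_r lnl _ _ Hlnl Hn. rewrite E1. lra.
 have Hbp : 0 < bb by apply: Rinv_0_lt_compat.
 have := Rmult_lt_compat_l bb _ _ Hbp h1.
 have -> : bb * (INR n * lnl) = (bb * INR n) * lnl by ring. rewrite E2. lra.
set a := Rmin (/ INR m) ((bb + lnl) / 2).
have Ha1 : a <= / INR m by apply: Rmin_l.
have Ha2 : a <= (bb + lnl) / 2 by apply: Rmin_r.
have Ha3 : bb < a by apply: Rmin_glb_lt; lra.
have Hq : lam * exp a < 1.
 have : exp a < exp lnl by apply: exp_increasing; lra.
 rewrite /lnl exp_ln; last lra. move=> h. have : lam * (1 / lam) = 1 by field; lra. nra.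
set eps := Rmin (eps0 / 2) ((a - bb) / 2).
have He1 : 0 < eps by apply: Rmin_pos; lra.
have He2 : eps < eps0 by rewrite /eps; have := Rmin_l (eps0 / 2) ((a - bb) / 2); lra.
have Hab : 2 * eps + bb <= a by rewrite /eps; have := Rmin_r (eps0 / 2) ((a - bb) / 2); lra.
have [c [HS0 [HU0 HD0]]] := Hh eps (conj He1 He2).
set c1 := Rmax 1 c.
have Hc1 : 1 <= c1 by apply: Rmax_l.
have Hcc : c <= c1 by apply: Rmax_r.
have HS1 : forall (k : Z) (j : nat), (0 < j)%nat -> forall v, Es k v ->
    vnorm (dfpow DF orb k j v) <= c1 * lam ^ j * exp (eps * Rabs (IZR k)) * vnorm v.
 move=> k j Hj v Hv. apply: Rle_trans (HS0 k j Hj v Hv) _.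
 apply: Rmult_le_compat_r; first exact: vnorm_nonneg.
 apply: Rmult_le_compat_r; first by left; apply: exp_pos.
 apply: Rmult_le_compat_r => //. apply: pow_le; lra.
have HU1 : forall (k : Z) (j : nat), (0 < j)%nat -> forall v, Eu k v ->
    vnorm (dfneg DG orb k j v) <= c1 * lam ^ j * exp (eps * Rabs (IZR k)) * vnorm v.
 move=> k j Hj v Hv. apply: Rle_trans (HU0 k j Hj v Hv) _.
 apply: Rmult_le_compat_r; first exact: vnorm_nonneg.
 apply: Rmult_le_compat_r; first by left; apply: exp_pos.
 apply: Rmult_le_compat_r => //. apply: pow_le; lra.
have HD1 : forall (k : Z) v s u, Es k s -> Eu k u -> v = vadd s u ->
    vnorm s <= c1 * exp (eps * Rabs (IZR k)) * vnorm v /\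
    vnorm u <= c1 * exp (eps * Rabs (IZR k)) * vnorm v.
 move=> k v s u Hs Hu Hv. have [h1 h2] := HD0 k v s u Hs Hu Hv.
 have : c * exp (eps * Rabs (IZR k)) * vnorm v <= c1 * exp (eps * Rabs (IZR k)) * vnorm v.
  apply: Rmult_le_compat_r; first exact: vnorm_nonneg.
  apply: Rmult_le_compat_r => //. left; apply: exp_pos.
 lra.
set q := qq lam a.
have Hq1 : q < 1 by rewrite /q /qq.
set K := 2 * c1 ^ 2 / (1 - q) * Dd d.
have HK : 0 <= K.
 rewrite /K. apply: Rmult_le_pos; last exact: Dd_nonneg.
 apply: Rmult_le_pos; first nra. left; apply: Rinv_0_lt_compat; lra.
set U := Ups DF DG orb Hsp.
have EST : forall eta C, 0 <= C -> (forall k, vnorm (eta k) <= C * exp (bb * Rabs (IZR k))) ->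
   conv DF DG orb Hsp eta /\ forall k, vnorm (U eta k) <= K * C * exp (a * Rabs (IZR k)).
 move=> eta C HC He.
 have [H1 H2] := est Hsp (ltac:(lra) : 0 <= lam) Hc1 (ltac:(lra) : 0 <= eps) Hb0 Hab Hq HS1 HU1 HD1 HC He.
 split => // k. have := H2 k. rewrite /K /q /Rdiv. have -> : 2 * (c1 ^ 2 * C * exp (a * Rabs (IZR k))) * / (1 - qq lam a) * Dd d = 2 * c1 ^ 2 * / (1 - qq lam a) * Dd d * C * exp (a * Rabs (IZR k)) by ring.
 done.
have CONV : forall eta, inX n eta -> conv DF DG orb Hsp eta.
 move=> eta H. have [C [HC He]] := inX_bnd H. exact: (proj1 (EST eta C HC He)).
have XM : forall eta C, (forall k, vnorm (U eta k) <= K * C * exp (a * Rabs (IZR k))) ->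
   forall k, exp (- Rabs (IZR k) / INR m) * vnorm (U eta k) <= K * C.
 move=> eta C H k. rewrite wexp_eq.
 have HKC : 0 <= K * C.
  have := H 0%Z. have := vnorm_nonneg (U eta 0%Z). have := exp_pos (a * Rabs (IZR 0)). nra.
 have Hk := Rabs_pos (IZR k).
 apply: Rle_trans (_ : exp (- (/ INR m * Rabs (IZR k))) * (K * C * exp (a * Rabs (IZR k))) <= _).
  apply: Rmult_le_compat_l => //. left; exact: exp_pos.
 have -> : exp (- (/ INR m * Rabs (IZR k))) * (K * C * exp (a * Rabs (IZR k)))
   = K * C * exp (a * Rabs (IZR k) + - (/ INR m * Rabs (IZR k))) by rewrite exp_plus; ring.
 have : exp (a * Rabs (IZR k) + - (/ INR m * Rabs (IZR k))) <= 1.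
  rewrite -exp_0. apply: exp_le. nra.
 move=> h. have := Rmult_le_compat_l _ _ _ HKC h. lra.
exists U. split; [|split; [|split; [|split]]].
- move=> eta Heta. have [C [HC He]] := inX_bnd Heta. have [_ Hu] := EST eta C HC He.
  exists (K * C). exact: XM.
- move=> eta eta' a0 b0 H1 H2 k i. apply: Ups_lin; exact: CONV.
- move=> eta Heta e He. exists (e / (K + 1)); split.
   apply: Rdiv_lt_0_compat; lra.
  move=> eta' Heta' Hw.
  set zeta := fun k => vsub (eta' k) (eta k).
  have Hz : inX n zeta.
   have [C1 [HC1 He1']] := inX_bnd Heta. have [C2 [HC2 He2']] := inX_bnd Heta'.
   exists (Dd d * (C2 + C1)) => k. rewrite wexp_eq. apply: wt_fwd.
   apply: Rle_trans (vnorm_sub _ _) _.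
   have := He1' k; have := He2' k; have := Dd_nonneg d. move=> hD h2 h1.
   have := Rmult_le_compat_l _ _ _ hD (Rplus_le_compat _ _ _ _ h2 h1). lra.
  set W := wnorm n zeta.
  have HW0 : 0 <= W.
   have := wnorm_ub Hz 0%Z. have := vnorm_nonneg (zeta 0%Z). have := exp_pos (- Rabs (IZR 0) / INR n). rewrite -/W. nra.
  have HzB : forall k, vnorm (zeta k) <= W * exp (bb * Rabs (IZR k)).
   move=> k. apply: wt_inv. rewrite -wexp_eq. exact: wnorm_ub.
  have [_ HUz] := EST zeta W HW0 HzB.
  have E : (fun k => vsub (U eta' k) (U eta k)) = U zeta.
   apply: functional_extensionality => k; apply: functional_extensionality => i.
   have -> : zeta = (fun k => vadd (vscale 1 (eta' k)) (vscale (-1) (eta k))).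
    apply: functional_extensionality => k'. rewrite /zeta. vext.
   rewrite /U Ups_lin; [| exact: CONV | exact: CONV]. rewrite /vsub. ring.
  rewrite E. apply: Rle_lt_trans (_ : wnorm m (U zeta) <= K * W) _.
   apply: wnorm_least. exists (K * W). exact: XM. exact: XM.
  have : W < e / (K + 1) by []. move=> hW.
  have : K * W <= K * (e / (K + 1)) by apply: Rmult_le_compat_l; lra.
  have : K * (e / (K + 1)) < e.
   have -> : K * (e / (K + 1)) = e - e / (K + 1) by field; lra.
   have : 0 < e / (K + 1) by apply: Rdiv_lt_0_compat; lra. lra.
  lra.
- move=> eta Heta k i. apply: (Ups_Gamma HinvS HinvU HBA). exact: CONV.
- move=> eta Heta k i. apply: (Gamma_Ups HinvU HBA). exact: CONV.
Qed.
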